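(* Let $\bar p$ be any maximizer of $p\mapsto\min_{k\in\mathcal K}\mathrm{SIR}_k(p)/\gamma_k$ over $\mathcal P$ (equivalently over $\{p\ge0:\max_{n\in\mathcal N}g_n(p)\le1\}$). Then (i) $\max_{n\in\mathcal N}g_n(\bar p)=1$; (ii) if $V$ is irreducible, then $\bar p$ is unique and there is $\beta>0$ with $\gamma_k/\mathrm{SIR}_k(\bar p)=\beta$ for all $k\in\mathcal K$.
   Context: Network model: $K\ge 2$ links, $\mathcal K=\{1,\dots,K\}$. Power constraint set $\mathcal P=\{p\in\mathbb R_+^K: Cp\le\hat p\}$, where $C\in\{0,1\}^{N\times K}$ has at least one entry equal to $1$ in each column and $\hat p=(P_1,\dots,P_N)\in\mathbb R_{++}^N$; $\mathcal N=\{1,\dots,N\}$; $c_n\in\{0,1\}^K$ is the $n$-th row of $C$ (as a column vector) and $g_n(p)=c_n^Tp/P_n$. Gain matrix $V\in\mathbb R_+^{K\times K}$ with zero diagonal, noise vector $z\in\mathbb R_{++}^K$, $\mathrm{SIR}_k(p)=p_k/((Vp)_k+z_k)$. SIR targets $\gamma_1,\dots,\gamma_K>0$. *)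

(* Defs.v *)
From HB Require Import structures.
From mathcomp Require Import all_boot all_order all_algebra.
Set Implicit Arguments. Unset Strict Implicit. Unset Printing Implicit Defensive.
Import Order.TTheory GRing.Theory Num.Theory.
Local Open Scope ring_scope.

Section Defs.
Variable R : rcfType.

Definition minI (m : nat) (f : 'I_m -> R) : R :=
  if [pick i : 'I_m] is Some i0 then \big[Num.min/f i0]_(i < m) f i else 0.
Definition maxI (m : nat) (f : 'I_m -> R) : R :=
  if [pick i : 'I_m] is Some i0 then \big[Num.max/f i0]_(i < m) f i else 0.

Definition SIR (K : nat) (V : 'M[R]_K) (z p : 'cV[R]_K) (k : 'I_K) : R :=
  p k 0 / ((V *m p) k 0 + z k 0).

Definition gfun (N K : nat) (C : 'M[R]_(N, K)) (phat : 'cV[R]_N)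
  (p : 'cV[R]_K) (n : 'I_N) : R := (C *m p) n 0 / phat n 0.

Definition feasible (N K : nat) (C : 'M[R]_(N, K)) (phat : 'cV[R]_N)
  (p : 'cV[R]_K) : Prop :=
  (forall k, 0 <= p k 0) /\ (forall n, (C *m p) n 0 <= phat n 0).

Definition objective (K : nat) (V : 'M[R]_K) (z gamma p : 'cV[R]_K) : R :=
  minI (fun k => SIR V z p k / gamma k 0).

Definition maximizer (N K : nat) (C : 'M[R]_(N, K)) (phat : 'cV[R]_N)
  (V : 'M[R]_K) (z gamma p : 'cV[R]_K) : Prop :=
  feasible C phat p /\
  forall q, feasible C phat q -> objective V z gamma q <= objective V z gamma p.

Definition irreducible (K : nat) (V : 'M[R]_K) : Prop :=
  forall i j : 'I_K, connect (fun a b : 'I_K => 0 < V a b) i j.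
End Defs.

(* Main.v *)
Require Import Defs.
From HB Require Import structures.
From mathcomp Require Import all_boot all_order all_algebra.
From Stdlib Require Import Classical.
Import Order.TTheory GRing.Theory Num.Theory.
Local Open Scope ring_scope.
Set Warnings "-notation-overridden,-ambiguous-paths".

Section Gen.
Variable R : rcfType.

Lemma bigmin_le_seq (T : eqType) (f : T -> R) a (r : seq T) k :
  k \in r -> \big[Num.min/a]_(i <- r) f i <= f k.
Proof.
elim: r => [|y r IH] //= ; rewrite in_cons big_cons => /orP [/eqP ->|kr].
  by rewrite ge_min lexx.
by rewrite ge_min IH ?orbT.
Qed.

Lemma bigmax_ge_seq (T : eqType) (f : T -> R) a (r : seq T) k :
  k \in r -> f k <= \big[Num.max/a]_(i <- r) f i.
Proof.
elim: r => [|y r IH] //= ; rewrite in_cons big_cons => /orP [/eqP ->|kr].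
  by rewrite le_max lexx.
by rewrite le_max IH ?orbT.
Qed.

Lemma minI_le m (f : 'I_m -> R) k : minI f <= f k.
Proof.
rewrite /minI; case: pickP => [i0 _|h]; last by have := h k.
exact: bigmin_le_seq (mem_index_enum k).
Qed.

Lemma maxI_ge m (f : 'I_m -> R) k : f k <= maxI f.
Proof.
rewrite /maxI; case: pickP => [i0 _|h]; last by have := h k.
exact: bigmax_ge_seq (mem_index_enum k).
Qed.

Lemma minI_gt m (f : 'I_m -> R) t (i : 'I_m) : (forall k, t < f k) -> t < minI f.
Proof.
move=> H; rewrite /minI; case: pickP => [i0 _|h]; last by have := h i.
by apply: (big_ind (fun x => t < x)) => // x y hx hy; rewrite lt_min hx hy.
Qed.

Lemma maxI_le m (f : 'I_m -> R) t (i : 'I_m) : (forall k, f k <= t) -> maxI f <= t.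
Proof.
move=> H; rewrite /maxI; case: pickP => [i0 _|h]; last by have := h i.
by apply: (big_ind (fun x => x <= t)) => // x y hx hy; rewrite ge_max hx hy.
Qed.

Lemma maxI_att m (f : 'I_m -> R) (i : 'I_m) : exists k, maxI f = f k.
Proof.
rewrite /maxI; case: pickP => [i0 _|h]; last by have := h i.
apply: (big_ind (fun x => exists k, x = f k)); first by exists i0.
  move=> x y [kx ->] [ky ->]; case: (leP (f kx) (f ky)) => _.
    by exists ky. by exists kx.
by move=> k _; exists k.
Qed.

Lemma mx_mono m K (A : 'M[R]_(m, K)) (p q : 'cV[R]_K) i :
  (forall i j, 0 <= A i j) -> (forall j, p j 0 <= q j 0) ->
  (A *m p) i 0 <= (A *m q) i 0.
Proof.
move=> hA hpq; rewrite !mxE; apply: ler_sum => j _; exact: ler_wpM2l.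
Qed.

Lemma mx_strict m K (A : 'M[R]_(m, K)) (p q : 'cV[R]_K) i j :
  (forall i j, 0 <= A i j) -> (forall j, p j 0 <= q j 0) ->
  p j 0 < q j 0 -> 0 < A i j ->
  (A *m p) i 0 < (A *m q) i 0.
Proof.
move=> hA hpq hj hAij; rewrite !mxE (bigD1 j) //= [X in _ < X](bigD1 j) //=.
apply: ltr_leD; first by rewrite ltr_pM2l.
apply: ler_sum => k _; exact: ler_wpM2l.
Qed.

Lemma mx_ge0 m K (A : 'M[R]_(m, K)) (p : 'cV[R]_K) i :
  (forall i j, 0 <= A i j) -> (forall j, 0 <= p j 0) -> 0 <= (A *m p) i 0.
Proof.
move=> hA hp; rewrite mxE; apply: sumr_ge0 => j _; exact: mulr_ge0.
Qed.

End Gen.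
Section Main.
Variable R : rcfType.
Variables (K N : nat) (C : 'M[R]_(N, K)) (phat : 'cV[R]_N) (V : 'M[R]_K)
  (z gamma : 'cV[R]_K).
Hypothesis hC01 : forall n k, C n k = 0 \/ C n k = 1.
Hypothesis hphat : forall n, 0 < phat n 0.
Hypothesis hV : forall i j, 0 <= V i j.
Hypothesis hz : forall k, 0 < z k 0.
Hypothesis hgamma : forall k, 0 < gamma k 0.

Lemma hC : forall n k, 0 <= C n k.
Proof. by move=> n k; case: (hC01 n k) => ->. Qed.

Definition T (t : R) (p : 'cV[R]_K) : 'cV[R]_K :=
  \col_k (t * gamma k 0 * ((V *m p) k 0 + z k 0)).
Definition F (t : R) (p : 'cV[R]_K) : 'cV[R]_K :=
  \col_k ((p k 0 + T t p k 0) / 2).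

Lemma TE t (p : 'cV[R]_K) k : T t p k 0 = t * gamma k 0 * ((V *m p) k 0 + z k 0).
Proof. by rewrite /T [in LHS]mxE. Qed.

Lemma FE t (p : 'cV[R]_K) k : F t p k 0 = (p k 0 + T t p k 0) / 2.
Proof. by rewrite /F [in LHS]mxE. Qed.

Lemma den_gt0 (p : 'cV[R]_K) k : (forall j, 0 <= p j 0) -> 0 < (V *m p) k 0 + z k 0.
Proof. move=> hp; apply: ltr_wpDl (hz k); exact: mx_ge0. Qed.

Lemma sir_ge t (p : 'cV[R]_K) k : (forall j, 0 <= p j 0) ->
  (t <= SIR V z p k / gamma k 0) = (T t p k 0 <= p k 0).
Proof.
move=> hp; by rewrite /SIR ler_pdivlMr // ler_pdivlMr ?den_gt0 // TE.
Qed.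

Lemma sir_gt t (p : 'cV[R]_K) k : (forall j, 0 <= p j 0) ->
  (t < SIR V z p k / gamma k 0) = (T t p k 0 < p k 0).
Proof.
move=> hp; by rewrite /SIR ltr_pdivlMr // ltr_pdivlMr ?den_gt0 // TE.
Qed.

Lemma T_mono t (p q : 'cV[R]_K) k : 0 <= t -> (forall j, p j 0 <= q j 0) ->
  T t p k 0 <= T t q k 0.
Proof.
move=> ht hpq; rewrite !TE; apply: ler_wpM2l; first by rewrite mulr_ge0 // ltW.
by rewrite lerD2r; apply: mx_mono.
Qed.

Lemma T_strict t (p q : 'cV[R]_K) k j : 0 < t -> (forall j, p j 0 <= q j 0) ->
  p j 0 < q j 0 -> 0 < V k j -> T t p k 0 < T t q k 0.
Proof.
move=> ht hpq hj hv; rewrite !TE ltr_pM2l ?mulr_gt0 // ltrD2r.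
exact: mx_strict hj hv.
Qed.

Lemma T_ge0 t (p : 'cV[R]_K) k : 0 <= t -> (forall j, 0 <= p j 0) -> 0 <= T t p k 0.
Proof.
move=> ht hp; rewrite TE; apply: mulr_ge0; first exact: mulr_ge0 ht (ltW (hgamma k)).
exact: ltW (den_gt0 p k hp).
Qed.

Lemma avg_le (a b : R) : b <= a -> b <= (a + b) / 2 /\ (a + b) / 2 <= a.
Proof.
move=> h; split.
  by rewrite ler_pdivlMr // mulrDr mulr1 lerD2r.
by rewrite ler_pdivrMr // mulrDr mulr1 lerD2l.
Qed.

Lemma avg_lt (a b : R) : b < a -> b < (a + b) / 2 /\ (a + b) / 2 < a.
Proof.
move=> h; split.
  by rewrite ltr_pdivlMr // mulrDr mulr1 ltrD2r.
by rewrite ltr_pdivrMr // mulrDr mulr1 ltrD2l.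
Qed.

Definition good t (p : 'cV[R]_K) := (forall j, 0 <= p j 0) /\ (forall j, T t p j 0 <= p j 0).

Lemma F_le t (p : 'cV[R]_K) k : good t p -> T t p k 0 <= F t p k 0 <= p k 0.
Proof. by case=> _ h; rewrite FE; have [-> ->] := avg_le _ _ (h k). Qed.

Lemma F_good t (p : 'cV[R]_K) : 0 <= t -> good t p -> good t (F t p).
Proof.
move=> ht g; have hF := fun k => F_le _ _ k g; case: g => hp hT; split.
  by move=> j; case/andP: (hF j) => h _; apply: le_trans h; apply: T_ge0.
move=> j; case/andP: (hF j) => h _; apply: le_trans h; apply: T_mono => // i.
by case/andP: (hF i).
Qed.

Lemma F_N t (p : 'cV[R]_K) k : 0 <= t -> good t p -> T t p k 0 < p k 0 ->
  T t (F t p) k 0 < F t p k 0.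
Proof.
move=> ht g hk; apply: (@le_lt_trans _ _ (T t p k 0)).
  by apply: T_mono => // i; case/andP: (F_le _ _ i g).
by rewrite FE; case: (avg_lt _ _ hk).
Qed.

Lemma F_edge t (p : 'cV[R]_K) k j : 0 < t -> good t p -> T t p j 0 < p j 0 -> 0 < V k j ->
  T t (F t p) k 0 < F t p k 0.
Proof.
move=> ht g hj hv; apply: (@lt_le_trans _ _ (T t p k 0)).
  apply: (T_strict _ _ _ _ j) => //; first by move=> i; case/andP: (F_le _ _ i g).
  by rewrite FE; case: (avg_lt _ _ hj).
by case/andP: (F_le _ _ k g).
Qed.


Lemma T_pos t (p : 'cV[R]_K) k : 0 < t -> (forall j, 0 <= p j 0) -> 0 < T t p k 0.
Proof. move=> ht hp; rewrite TE !mulr_gt0 //; exact: den_gt0. Qed.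

Definition G t (p : 'cV[R]_K) m := iter m (F t) p.

Lemma G_good t p m : 0 <= t -> good t p -> good t (G t p m).
Proof. move=> ht g; elim: m => [|m IH] //=; exact: F_good. Qed.

Lemma G_le t p m : 0 <= t -> good t p -> forall j, G t p m j 0 <= p j 0.
Proof.
move=> ht g; elim: m => [|m IH] j //=.
apply: le_trans (IH j); by case/andP: (F_le _ _ j (G_good _ _ m ht g)).
Qed.

Lemma G_N_mono t p m n k : 0 <= t -> good t p ->
  T t (G t p m) k 0 < G t p m k 0 -> T t (G t p (n + m)) k 0 < G t p (n + m) k 0.
Proof.
move=> ht g h; elim: n => [|n IH] //=.
rewrite ?addSn /G ?iterS; exact: F_N _ _ _ ht (G_good _ _ _ ht g) IH.
Qed.

Lemma G_path t p : 0 < t -> good t p -> forall s x,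
  path (fun a b => 0 < V a b) x s ->
  T t p (last x s) 0 < p (last x s) 0 ->
  T t (G t p (size s)) x 0 < G t p (size s) x 0.
Proof.
move=> ht g; elim=> [|y s IH] x //= /andP [hxy hp] hl.
rewrite /G ?iterS; apply: (F_edge _ _ _ y) => //.
  exact: G_good _ _ _ (ltW ht) g.
exact: IH.
Qed.

Lemma all_N t p j0 : 0 < t -> good t p -> T t p j0 0 < p j0 0 -> irreducible V ->
  exists m, forall k, T t (G t p m) k 0 < G t p m k 0.
Proof.
move=> ht g hj irr.
have one k : exists m, T t (G t p m) k 0 < G t p m k 0.
  have /connectP [s hs hl] := irr k j0.
  by exists (size s); apply: G_path => //; rewrite -hl.
suff [m hm] : exists m, forall k, k \in index_enum 'I_K ->
    T t (G t p m) k 0 < G t p m k 0.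
  by exists m => k; apply: hm; rewrite mem_index_enum.
elim: (index_enum 'I_K) => [|y r [m2 IH]]; first by exists 0%N.
have [m1 h1] := one y.
exists (m1 + m2)%N => k; rewrite in_cons => /orP [/eqP ->|kr].
  by rewrite addnC; apply: (G_N_mono _ _ _ _ _ (ltW ht) g h1).
by apply: (G_N_mono _ _ _ _ _ (ltW ht) g (IH k kr)).
Qed.

Lemma good_max p : maximizer C phat V z gamma p ->
  good (objective V z gamma p) p.
Proof.
case=> [[hp _] _]; split => // j; rewrite -sir_ge //; exact: minI_le.
Qed.

Lemma balance p : maximizer C phat V z gamma p -> irreducible V ->
  0 < objective V z gamma p ->
  forall k, T (objective V z gamma p) p k 0 = p k 0.
Proof.
move=> hm irr ht; have g := good_max p hm.
set t := objective V z gamma p in ht g *.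
case: (classic (exists j, T t p j 0 < p j 0)) => [[j0 hj]|hn]; last first.
  move=> k; apply/eqP; rewrite eq_le; case: g => _ -> /=.
  by rewrite leNgt; apply/negP => h; apply: hn; exists k.
exfalso; have [m hm'] := all_N _ _ j0 ht g hj irr.
have [gr _] := G_good _ _ m (ltW ht) g.
case: hm => [[hp hc] hmax].
have hr : feasible C phat (G t p m).
  split => // n; apply: le_trans (hc n); apply: mx_mono => //; first exact: hC.
  exact: G_le (ltW ht) g.
have := hmax _ hr; rewrite leNgt => /negP; apply.
rewrite /objective; apply: (@minI_gt _ _ _ _ j0) => k; rewrite sir_gt //.
Qed.

Lemma le_balanced t (p q : 'cV[R]_K) (i0 : 'I_K) : 0 < t ->
  (forall j, 0 <= p j 0) -> (forall j, 0 <= q j 0) ->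
  (forall k, T t p k 0 = p k 0) -> (forall k, T t q k 0 = q k 0) ->
  forall k, p k 0 <= q k 0.
Proof.
move=> ht hp hq bp bq.
have qpos j : 0 < q j 0 by rewrite -bq; apply: T_pos.
have [k hk] := @maxI_att _ _ (fun k => p k 0 / q k 0) i0.
set c := maxI _ in hk.
have hle j : p j 0 <= c * q j 0.
  by rewrite -ler_pdivrMr //; exact: (@maxI_ge _ _ (fun k => p k 0 / q k 0) j).
have c1 : c <= 1.
  rewrite leNgt; apply/negP => c1.
  have hck : c * q k 0 = p k 0 by rewrite hk divfK // lt0r_neq0.
  have : p k 0 < p k 0; last by rewrite ltxx.
  rewrite -{1}bp -hck -bq.
  apply: (@le_lt_trans _ _ (T t (c *: q) k 0)).
    by apply: T_mono; [exact: ltW | move=> j; rewrite mxE].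
  rewrite !TE -scalemxAr [X in X + _]mxE.
  have -> : c * (t * gamma k 0 * ((V *m q) k 0 + z k 0)) =
    t * gamma k 0 * (c * (V *m q) k 0 + c * z k 0).
    by rewrite -mulrDr mulrCA.
  rewrite ltr_pM2l ?mulr_gt0 // ltrD2l ltr_pMl //.
move=> j; have := @maxI_ge _ _ (fun k => p k 0 / q k 0) j.
by rewrite -/c => h; have := le_trans h c1; rewrite ler_pdivrMr // mul1r.
Qed.


Lemma frac_lt (a b w c : R) : 0 < a -> 0 <= b -> 0 < w -> 1 < c ->
  a / (b + w) < c * a / (c * b + w).
Proof.
move=> ha hb hw hc.
have c0 : 0 < c by apply: lt_trans hc.
have D1 : 0 < b + w by rewrite ltr_wpDl.
have D2 : 0 < c * b + w by rewrite ltr_wpDl // mulr_ge0 // ltW.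
rewrite ltr_pdivrMr // mulrAC ltr_pdivlMr //.
rewrite [c * a]mulrC -mulrA !mulrDr ltrD2l ltr_pM2l // ltr_pMl //.
Qed.

Lemma obj_pos p (i0 : 'I_K) (n0 : 'I_N) : maximizer C phat V z gamma p ->
  0 < objective V z gamma p.
Proof.
case=> _ hmax.
set mu := minI (fun n => phat n 0).
have mu0 : 0 < mu by apply: (@minI_gt _ _ _ _ n0).
have K0 : (0 < K)%N by exact: leq_ltn_trans (leq0n _) (ltn_ord i0).
have Kr : 0 < (K%:R : R) by rewrite ltr0n.
set d := mu / K%:R.
have d0 : 0 < d by rewrite divr_gt0.
set q := const_mx d : 'cV[R]_K.
have qE j : q j 0 = d by rewrite mxE.
have hq : feasible C phat q.
  split => [j|n]; first by rewrite qE ltW.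
  apply: (@le_trans _ _ mu); last exact: minI_le.
  rewrite mxE (@le_trans _ _ (\sum_(k < K) d)) //.
    apply: ler_sum => k _; rewrite qE; case: (hC01 n k) => ->.
      by rewrite mul0r; exact: ltW.
    by rewrite mul1r.
  by rewrite sumr_const card_ord -mulr_natr /d divfK // lt0r_neq0.
apply: lt_le_trans (hmax q hq).
rewrite /objective; apply: (@minI_gt _ _ _ _ i0) => k.
rewrite sir_gt; last by move=> j; rewrite qE ltW.
by rewrite TE !mul0r qE.
Qed.

Lemma part1 p (i0 : 'I_K) (hCcol : forall k, exists n, C n k = 1) :
  maximizer C phat V z gamma p -> maxI (fun n => gfun C phat p n) = 1.
Proof.
move=> hm; have [n0 hn0] := hCcol i0.
have ht := obj_pos p i0 n0 hm.
have [hp hT] := good_max p hm.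
set t := objective V z gamma p in ht hT.
have ppos k : 0 < p k 0 by apply: lt_le_trans (hT k); apply: T_pos.
case: hm => [[_ hc] hmax].
set M := maxI _.
have g1 n : gfun C phat p n <= 1 by rewrite /gfun ler_pdivrMr // mul1r.
have M1 : M <= 1 by apply: (@maxI_le _ _ _ _ n0).
have M0 : 0 < M.
  apply: lt_le_trans (@maxI_ge _ _ _ n0).
  rewrite /gfun divr_gt0 //.
  have -> : 0 = (C *m (0 : 'cV[R]_K)) n0 0 by rewrite mulmx0 mxE.
  apply: (@mx_strict _ _ _ _ _ _ _ i0); first exact: hC.
  - by move=> j; rewrite mxE ltW.
  - by rewrite mxE.
  - by rewrite hn0.
apply/eqP; rewrite eq_le M1 /= leNgt; apply/negP => hM.
set c := M^-1.
have c1 : 1 < c by rewrite invf_gt1.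
set q := c *: p.
have qE j : q j 0 = c * p j 0 by rewrite mxE.
have AqE (m : nat) (A : 'M[R]_(m, K)) i : (A *m q) i 0 = c * (A *m p) i 0.
  by rewrite -scalemxAr mxE.
have hq : feasible C phat q.
  split => [j|n]; first by rewrite qE mulr_ge0 // ltW // (lt_trans ltr01 c1).
  rewrite AqE mulrC ler_pdivrMr // mulrC -ler_pdivrMr //.
  exact: (@maxI_ge _ _ (fun n => gfun C phat p n) n).
have := hmax q hq; rewrite leNgt => /negP; apply.
rewrite /objective; apply: (@minI_gt _ _ _ _ i0) => k.
apply: (@le_lt_trans _ _ (SIR V z p k / gamma k 0)); first exact: minI_le.
rewrite ltr_pM2r ?invr_gt0 // /SIR qE AqE.
apply: frac_lt => //; exact: mx_ge0.
Qed.

Lemma main_sec (hK : (2 <= K)%N) (hCcol : forall k, exists n, C n k = 1)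
  (pbar : 'cV[R]_K) (hmax : maximizer C phat V z gamma pbar) :
  maxI (fun n => gfun C phat pbar n) = 1 /\
  (irreducible V ->
     (forall p, maximizer C phat V z gamma p -> p = pbar) /\
     exists beta : R, 0 < beta /\
       forall k, gamma k 0 / SIR V z pbar k = beta).
Proof.
have K0 : (0 < K)%N := leq_trans (isT : (1 <= 2)%N) hK.
pose i0 := Ordinal K0.
have [n0 _] := hCcol i0.
split; first exact: part1 pbar i0 hCcol hmax.
move=> irr.
have ht := obj_pos pbar i0 n0 hmax.
have bp := balance pbar hmax irr ht.
split.
  move=> p hp.
  have eqo : objective V z gamma p = objective V z gamma pbar.
    by apply/le_anti; rewrite (hmax.2 p hp.1) (hp.2 pbar hmax.1).
  have ht' : 0 < objective V z gamma p by rewrite eqo.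
  have bq := balance p hp irr ht'; rewrite eqo in bq.
  apply/matrixP => i j; rewrite (ord1 j); apply/le_anti/andP; split.
    by apply: (le_balanced _ _ _ i0 ht) => //; [exact: hp.1.1 | exact: hmax.1.1].
  by apply: (le_balanced _ _ _ i0 ht) => //; [exact: hmax.1.1 | exact: hp.1.1].
exists (objective V z gamma pbar)^-1; split; first by rewrite invr_gt0.
move=> k; rewrite /SIR -{1}(bp k) TE mulfK; last first.
  by rewrite lt0r_neq0 // den_gt0 //; exact: hmax.1.1.
by rewrite invfM mulrCA mulfV ?mulr1 // lt0r_neq0.
Qed.

End Main.

Theorem lemma2 (R : rcfType) (K N : nat) (hK : (2 <= K)%N)
  (C : 'M[R]_(N, K)) (phat : 'cV[R]_N) (V : 'M[R]_K) (z gamma : 'cV[R]_K)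
  (hC01 : forall n k, C n k = 0 \/ C n k = 1)
  (hCcol : forall k, exists n, C n k = 1)
  (hphat : forall n, 0 < phat n 0)
  (hV : forall i j, 0 <= V i j)
  (hVdiag : forall i, V i i = 0)
  (hz : forall k, 0 < z k 0)
  (hgamma : forall k, 0 < gamma k 0)
  (pbar : 'cV[R]_K)
  (hmax : maximizer C phat V z gamma pbar) :
  maxI (fun n => gfun C phat pbar n) = 1 /\
  (irreducible V ->
     (forall p, maximizer C phat V z gamma p -> p = pbar) /\
     exists beta : R, 0 < beta /\
       forall k, gamma k 0 / SIR V z pbar k = beta).
Proof. exact: (@main_sec R K N C phat V z gamma hC01 hphat hV hz hgamma hK hCcol pbar hmax). Qed.
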